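(* Let $E$ be a linear space of bounded, uniformly continuous complex-valued functions on $\mathbb{R}$ which is closed under uniform convergence on $\mathbb{R}$ and invariant under translations (if $f\in E$ then $f(\cdot+t)\in E$ for every $t\in\mathbb{R}$). Let $A:E\to E$ be a linear operator such that $\|Af\|_\infty\le a\|f\|_\infty$ for all $f\in E$ (with a constant $a\ge 0$), and suppose $A$ commutes with translations: $A\big(f(\cdot+t)\big)=(Af)(\cdot+t)$ for all $f\in E$, $t\in\mathbb{R}$. Then for every $p\in[1,+\infty)$, every $N>0$ and every $f\in E$, $$\|Af\|_{p,N}\le a\,\|f\|_{p,N}.$$
   Context: For $N>0$ and $p\in[1,\infty)$ define $\|f\|_{p,N}=\sup_{x\in\mathbb{R}}\Big(\int_{x-N}^{x+N}|f(t)|^p\,dt\Big)^{1/p}$. Also $\|f\|_\infty=\sup_{x\in\mathbb{R}}|f(x)|$. *)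

(* Defs.v *)
From Stdlib Require Import Reals Lra ClassicalEpsilon.
Open Scope R_scope.

Definition Cplx : Type := (R * R)%type.
Definition Cadd (z w : Cplx) : Cplx := (fst z + fst w, snd z + snd w).
Definition Csub (z w : Cplx) : Cplx := (fst z - fst w, snd z - snd w).
Definition Cmul (z w : Cplx) : Cplx :=
  (fst z * fst w - snd z * snd w, fst z * snd w + snd z * fst w).
Definition C0 : Cplx := (0, 0).
Definition Cnorm (z : Cplx) : R := sqrt (fst z * fst z + snd z * snd z).

(* Real power x^p for x >= 0, with the convention 0^p = 0 (p > 0). *)
Definition powr (x p : R) : R := if Req_EM_T x 0 then 0 else Rpower x p.

(* Riemann integral over [a,b], total: 0 when not Riemann integrable
   (never used in that case: integrands below are continuous). *)
Definition RInt_total (g : R -> R) (a b : R) : R :=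
  match excluded_middle_informative (exists pr : Riemann_integrable g a b, True) with
  | left H => RiemannInt (proj1_sig (constructive_indefinite_description _
                 (let (pr, _) := H in ex_intro (fun _ : Riemann_integrable g a b => True) pr I)))
  | right _ => 0
  end.

Definition loc_pnorm (p N : R) (f : R -> Cplx) (x : R) : R :=
  powr (RInt_total (fun t => powr (Cnorm (f t)) p) (x - N) (x + N)) (1 / p).

Definition is_pN_norm (p N : R) (f : R -> Cplx) (s : R) : Prop :=
  is_lub (fun y => exists x, y = loc_pnorm p N f x) s.
Definition is_sup_norm (f : R -> Cplx) (s : R) : Prop :=
  is_lub (fun y => exists x, y = Cnorm (f x)) s.

Definition bdd_fun (f : R -> Cplx) : Prop := exists M, forall t, Cnorm (f t) <= M.
Definition unif_cont (f : R -> Cplx) : Prop :=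
  forall eps, 0 < eps -> exists delta, 0 < delta /\
    forall s t, Rabs (s - t) < delta -> Cnorm (Csub (f s) (f t)) < eps.
Definition unif_conv (fn : nat -> R -> Cplx) (g : R -> Cplx) : Prop :=
  forall eps, 0 < eps -> exists n0, forall n, (n >= n0)%nat ->
    forall t, Cnorm (Csub (fn n t) (g t)) < eps.

(* Main.v *)
From Stdlib Require Import Reals Lra Lia FunctionalExtensionality ClassicalEpsilon ZArith.
From Coquelicot Require Import Coquelicot.
Require Import Defs.
From Stdlib Require Import Reals.
Open Scope R_scope.

Lemma powr_pos u e : 0 < u -> powr u e = exp (e * ln u).
Proof. intros H. unfold powr. destruct (Req_EM_T u 0); [lra|reflexivity]. Qed.
Lemma powr_0 e : powr 0 e = 0.
Proof. unfold powr. destruct (Req_EM_T 0 0); [reflexivity|lra]. Qed.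
Lemma powr_ge0 u e : 0 <= powr u e.
Proof. unfold powr. destruct (Req_EM_T u 0). lra. unfold Rpower. left; apply exp_pos. Qed.
Lemma powr_gt0 u e : 0 < u -> 0 < powr u e.
Proof. intros H; rewrite powr_pos; auto; apply exp_pos. Qed.

Lemma exp_convex th u v : 0 <= th <= 1 ->
  exp (th*u + (1-th)*v) <= th * exp u + (1-th) * exp v.
Proof.
  intros Hth. set (m := th*u+(1-th)*v).
  assert (Hg: forall y, 1 + y <= exp y).
  { intro y. destruct (Req_dec y 0). subst; rewrite exp_0; lra. left; apply exp_ineq1; auto. }
  assert (E1: exp u = exp m * exp (u - m)) by (rewrite <- exp_plus; f_equal; ring).
  assert (E2: exp v = exp m * exp (v - m)) by (rewrite <- exp_plus; f_equal; ring).
  rewrite E1, E2. pose proof (exp_pos m).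
  pose proof (Hg (u-m)); pose proof (Hg (v-m)).
  assert (exp m * (1 + (u-m)) <= exp m * exp (u-m)) by (apply Rmult_le_compat_l; lra).
  assert (exp m * (1 + (v-m)) <= exp m * exp (v-m)) by (apply Rmult_le_compat_l; lra).
  assert (th * (exp m * (1 + (u-m))) + (1-th) * (exp m * (1 + (v-m))) = exp m) by (unfold m; ring).
  nra.
Qed.

Lemma young p al be : 1 <= p -> 0 <= al -> 0 <= be ->
  powr al (p-1) * be <= (p-1)/p * powr al p + 1/p * powr be p.
Proof.
  intros Hp Ha Hb.
  assert (H0: 0 <= (p-1)/p * powr al p + 1/p * powr be p).
  { pose proof (powr_ge0 al p); pose proof (powr_ge0 be p).
    assert (0 <= (p-1)/p) by (unfold Rdiv; apply Rmult_le_pos; [lra| left; apply Rinv_0_lt_compat; lra]).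
    assert (0 <= 1/p) by (unfold Rdiv; apply Rmult_le_pos; [lra| left; apply Rinv_0_lt_compat; lra]).
    nra. }
  destruct Ha as [Ha|Ha]; [|subst; rewrite powr_0; lra].
  destruct Hb as [Hb|Hb]; [|subst; lra].
  rewrite !powr_pos by auto.
  rewrite <- (exp_ln be) at 1 by auto. rewrite <- exp_plus.
  pose (th := (p-1)/p).
  replace ((p-1)*ln al + ln be) with (th * (p * ln al) + (1-th) * (p * ln be))
    by (unfold th; field; lra).
  replace (1/p) with (1-th) by (unfold th; field; lra).
  apply exp_convex. unfold th; split.
  unfold Rdiv; apply Rmult_le_pos; [lra| left; apply Rinv_0_lt_compat; lra].
  apply (Rmult_le_reg_r p); [lra|]. unfold Rdiv; rewrite Rmult_assoc, Rinv_l; lra.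
Qed.

Lemma powr_div u v e : 0 <= u -> 0 < v -> powr (u/v) e = powr u e / powr v e.
Proof. intros [Hu|Hu] Hv.
  rewrite !powr_pos; auto. unfold Rdiv. rewrite ln_mult, ln_Rinv; auto.
  rewrite <- exp_Ropp, <- exp_plus. f_equal. ring.
  apply Rinv_0_lt_compat; auto. apply Rdiv_lt_0_compat; auto.
  subst. unfold Rdiv; rewrite Rmult_0_l, powr_0; ring. Qed.
Lemma powr_mult u v e : 0 <= u -> 0 <= v -> powr (u*v) e = powr u e * powr v e.
Proof. intros [Hu|Hu] [Hv|Hv]; try (subst; rewrite ?Rmult_0_l, ?Rmult_0_r, !powr_0; ring).
  rewrite !powr_pos; auto. rewrite ln_mult; auto. rewrite <- exp_plus. f_equal. ring.
  apply Rmult_lt_0_compat; auto. Qed.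
Lemma powr_powr u e1 e2 : 0 < u -> powr (powr u e1) e2 = powr u (e1*e2).
Proof. intros Hu. rewrite (powr_pos u e1); auto. rewrite powr_pos by apply exp_pos.
  rewrite ln_exp, powr_pos; auto. f_equal; ring. Qed.
Lemma powr_1 u : 0 <= u -> powr u 1 = u.
Proof. intros [Hu|Hu]. rewrite powr_pos; auto. rewrite Rmult_1_l, exp_ln; auto.
  subst; apply powr_0. Qed.
Lemma powr_plus u e1 e2 : 0 < u -> powr u (e1+e2) = powr u e1 * powr u e2.
Proof. intros Hu. rewrite !powr_pos; auto. rewrite <- exp_plus. f_equal; ring. Qed.
Lemma powr_le u v e : 0 <= e -> 0 <= u <= v -> powr u e <= powr v e.
Proof. intros He [[Hu|Hu] Huv].
  rewrite !powr_pos; try lra. destruct He as [He|He]; [|subst; rewrite !Rmult_0_l; lra].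
  destruct (Rle_lt_or_eq_dec _ _ Huv) as [H|H]; [|subst; lra].
  left; apply exp_increasing. apply Rmult_lt_compat_l; auto. apply ln_increasing; auto.
  subst; rewrite powr_0; apply powr_ge0. Qed.
Lemma powr_lt_inv u v e : 0 < e -> 0 <= u -> 0 <= v -> powr u e <= powr v e -> u <= v.
Proof. intros He Hu Hv H. destruct (Rle_or_lt u v) as [|Hlt]; auto.
  exfalso. destruct Hv as [Hv|Hv].
  rewrite !powr_pos in H; try lra.
  assert (ln v < ln u) by (apply ln_increasing; auto).
  assert (e * ln v < e * ln u) by (apply Rmult_lt_compat_l; auto).
  apply exp_increasing in H1. lra.
  subst. rewrite powr_0 in H. pose proof (powr_gt0 u e Hlt). lra. Qed.
Lemma powr_inv_p u p : 0 < p -> 0 <= u -> powr (powr u (1/p)) p = u.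
Proof. intros Hp [Hu|Hu]. rewrite powr_powr; auto. replace (1/p*p) with 1 by (field; lra).
  apply powr_1; lra. subst; rewrite !powr_0; auto. Qed.
Lemma powr_inv_p' u p : 0 < p -> 0 <= u -> powr (powr u p) (1/p) = u.
Proof. intros Hp [Hu|Hu]. rewrite powr_powr; auto. replace (p*(1/p)) with 1 by (field; lra).
  apply powr_1; lra. subst; rewrite !powr_0; auto. Qed.

Fixpoint rsum (g : nat -> R) (n : nat) : R :=
  match n with O => 0 | S m => rsum g m + g m end.
Lemma rsum_le g h n : (forall k, (k < n)%nat -> g k <= h k) -> rsum g n <= rsum h n.
Proof. induction n; simpl; intros H. lra. assert (g n <= h n) by (apply H; lia).
  assert (rsum g n <= rsum h n) by (apply IHn; intros; apply H; lia). lra. Qed.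
Lemma rsum_ext g h n : (forall k, (k < n)%nat -> g k = h k) -> rsum g n = rsum h n.
Proof. induction n; simpl; intros H. lra. rewrite H by lia. rewrite IHn; auto. Qed.
Lemma rsum_scal c g n : rsum (fun k => c * g k) n = c * rsum g n.
Proof. induction n; simpl. ring. rewrite IHn; ring. Qed.
Lemma rsum_plus g h n : rsum (fun k => g k + h k) n = rsum g n + rsum h n.
Proof. induction n; simpl. ring. rewrite IHn; ring. Qed.
Lemma rsum_ge0 g n : (forall k, (k<n)%nat -> 0 <= g k) -> 0 <= rsum g n.
Proof. intros H. replace 0 with (rsum (fun _ => 0) n). apply rsum_le; auto.
  induction n; simpl; auto. rewrite IHn. ring. intros; apply H; lia. Qed.

Section Key.
Variables (p : R) (hp : 1 <= p).

Lemma point_ineq r rho X Y S B : 0 <= r -> 0 <= rho -> 0 < X -> 0 < Y ->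
  powr X p = S -> powr Y p = B ->
  powr r p / r * rho <= powr X (p-1) * Y * ((p-1)/p * (powr r p / S) + 1/p * (powr rho p / B)).
Proof.
  intros Hr Hrho HX HY HS HB.
  assert (HS0: 0 < S) by (rewrite <- HS; apply powr_gt0; auto).
  assert (HB0: 0 < B) by (rewrite <- HB; apply powr_gt0; auto).
  assert (Hc: 0 <= (p-1)/p * (powr r p / S) + 1/p * (powr rho p / B)).
  { pose proof (powr_ge0 r p); pose proof (powr_ge0 rho p).
    assert (0 <= (p-1)/p) by (unfold Rdiv; apply Rmult_le_pos; [lra| left; apply Rinv_0_lt_compat; lra]).
    assert (0 <= 1/p) by (unfold Rdiv; apply Rmult_le_pos; [lra| left; apply Rinv_0_lt_compat; lra]).
    assert (0 <= powr r p / S) by (apply Rle_mult_inv_pos; auto).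
    assert (0 <= powr rho p / B) by (apply Rle_mult_inv_pos; auto).
    nra. }
  assert (HXY: 0 < powr X (p-1) * Y) by (apply Rmult_lt_0_compat; auto; apply powr_gt0; auto).
  destruct Hr as [Hr|Hr]; [|subst; rewrite powr_0 in *; replace (0/0*rho) with 0 by (unfold Rdiv; ring); apply Rmult_le_pos; lra].
  pose proof (young p (r/X) (rho/Y) hp (Rlt_le _ _ (Rdiv_lt_0_compat _ _ Hr HX))
     (Rle_mult_inv_pos _ _ Hrho HY)) as Hy.
  rewrite powr_div in Hy by lra. rewrite (powr_div rho) in Hy by lra.
  rewrite powr_div in Hy by lra. rewrite HS, HB in Hy.
  assert (E1: powr r p / r = powr r (p-1)).
  { replace p with ((p-1)+1) at 1 by ring. rewrite powr_plus, powr_1 by lra. field; lra. }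
  assert (E2: powr r (p-1) * rho = powr X (p-1) * Y * (powr r (p - 1) / powr X (p - 1) * (rho / Y))).
  { assert (0 < powr X (p-1)) by (apply powr_gt0; auto). field; lra. }
  rewrite E1, E2. apply Rmult_le_compat_l; lra.
Qed.
End Key.

Lemma sum_key p n D r rho S B : 1 <= p -> 0 < D ->
  (forall k, 0 <= r k) -> (forall k, 0 <= rho k) ->
  S = rsum (fun k => D * powr (r k) p) n -> 0 < S -> 0 < B ->
  rsum (fun k => D * powr (rho k) p) n <= B ->
  rsum (fun k => D * (powr (r k) p / r k * rho k)) n <=
    powr (powr S (1/p)) (p-1) * powr B (1/p).
Proof.
  intros hp HD Hr Hrho HS HS0 HB0 HT.
  set (X := powr S (1/p)). set (Y := powr B (1/p)).
  assert (HX: 0 < X) by (apply powr_gt0; auto). assert (HY: 0 < Y) by (apply powr_gt0; auto).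
  assert (HXp: powr X p = S) by (apply powr_inv_p; lra).
  assert (HYp: powr Y p = B) by (apply powr_inv_p; lra).
  eapply Rle_trans.
  { apply rsum_le. intros k _. apply Rmult_le_compat_l. lra.
    apply (point_ineq p hp (r k) (rho k) X Y S B); auto. }
  set (K := powr X (p-1) * Y).
  rewrite (rsum_ext _ (fun k => K * ((p-1)/p * / S) * (D * powr (r k) p) + K * (1/p * / B) * (D * powr (rho k) p))).
  2:{ intros; unfold Rdiv; ring. }
  rewrite rsum_plus, !rsum_scal. rewrite rsum_scal in HS, HT. rewrite <- HS.
  assert (0 < K) by (apply Rmult_lt_0_compat; auto; apply powr_gt0; auto).
  assert (0 <= K * (1/p * /B)) by (apply Rmult_le_pos; [lra| apply Rmult_le_pos; [unfold Rdiv; rewrite Rmult_1_l; left; apply Rinv_0_lt_compat; lra| left; apply Rinv_0_lt_compat; lra]]).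
  assert (K * (1 / p * / B) * (D * rsum (fun k => powr (rho k) p) n) <= K * (1 / p * / B) * B)
    by (apply Rmult_le_compat_l; auto).
  assert (K * ((p - 1) / p * / S) * S + K * (1 / p * / B) * B = K) by (field; repeat split; lra).
  lra.
Qed.

Lemma final_alg p a S B : 1 <= p -> 0 <= a -> 0 < S -> 0 < B ->
  S <= a * (powr (powr S (1/p)) (p-1) * powr B (1/p)) -> S <= powr a p * B.
Proof.
  intros hp ha HS HB H.
  set (X := powr S (1/p)) in *. set (Y := powr B (1/p)) in *.
  assert (HX: 0 < X) by (apply powr_gt0; auto). assert (HY: 0 < Y) by (apply powr_gt0; auto).
  assert (HXp: powr X p = S) by (apply powr_inv_p; lra).
  assert (HYp: powr Y p = B) by (apply powr_inv_p; lra).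
  assert (E: S = powr X (p-1) * X).
  { rewrite <- HXp. replace p with ((p-1)+1) at 1 by ring. rewrite powr_plus, powr_1; lra. }
  assert (HXm: 0 < powr X (p-1)) by (apply powr_gt0; auto).
  assert (X <= a * Y).
  { rewrite E in H. apply (Rmult_le_reg_l (powr X (p-1))); auto. nra. }
  rewrite <- HXp, <- HYp, <- powr_mult by lra. apply powr_le; lra.
Qed.

Lemma Cnorm_Cmod z : Cnorm z = Cmod z.
Proof. unfold Cnorm, Cmod. f_equal. simpl; ring. Qed.
Lemma Cnorm_ge0 z : 0 <= Cnorm z.
Proof. unfold Cnorm; apply sqrt_pos. Qed.
Lemma Cnorm_add z w : Cnorm (Cadd z w) <= Cnorm z + Cnorm w.
Proof. rewrite !Cnorm_Cmod. apply (Cmod_triangle z w). Qed.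
Lemma Cnorm_mul z w : Cnorm (Cmul z w) = Cnorm z * Cnorm w.
Proof. rewrite !Cnorm_Cmod. apply (Cmod_mult z w). Qed.
Lemma Cnorm_real x : Cnorm (x, 0) = Rabs x.
Proof. unfold Cnorm; simpl. replace (x*x+0*0) with (Rsqr x) by (unfold Rsqr; ring). apply sqrt_Rsqr_abs. Qed.
Lemma Cnorm_sq z : Cnorm z * Cnorm z = fst z * fst z + snd z * snd z.
Proof. unfold Cnorm. apply sqrt_sqrt. nra. Qed.

Fixpoint Hsum (d : nat -> Cplx) (F : R -> Cplx) (t : nat -> R) (n : nat) (y : R) : Cplx :=
  match n with O => C0 | S m => Cadd (Hsum d F t m y) (Cmul (d m) (F (y + t m))) end.

Lemma Hsum_norm d F t n y :
  Cnorm (Hsum d F t n y) <= rsum (fun k => Cnorm (d k) * Cnorm (F (y + t k))) n.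
Proof. induction n; simpl. unfold Cnorm, C0; simpl. replace (0*0+0*0) with 0 by ring. rewrite sqrt_0; lra.
  eapply Rle_trans. apply Cnorm_add. rewrite Cnorm_mul. lra. Qed.

Section Op.
Variables (E : (R -> Cplx) -> Prop)
  (E_bdd_uc : forall f, E f -> bdd_fun f /\ unif_cont f)
  (E_zero : E (fun _ => C0))
  (E_add : forall f g, E f -> E g -> E (fun t => Cadd (f t) (g t)))
  (E_scal : forall (c : Cplx) f, E f -> E (fun t => Cmul c (f t)))
  (E_transl : forall f (t : R), E f -> E (fun x => f (x + t)))
  (A : (R -> Cplx) -> (R -> Cplx))
  (A_into : forall f, E f -> E (A f))
  (A_add : forall f g, E f -> E g ->
      forall x, A (fun t => Cadd (f t) (g t)) x = Cadd (A f x) (A g x))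
  (A_scal : forall (c : Cplx) f, E f ->
      forall x, A (fun t => Cmul c (f t)) x = Cmul c (A f x))
  (a : R) (a_nonneg : 0 <= a)
  (A_bound : forall f, E f -> forall s s',
      is_sup_norm f s -> is_sup_norm (A f) s' -> s' <= a * s)
  (A_transl : forall f (t : R), E f ->
      forall x, A (fun y => f (y + t)) x = A f (x + t)).

Lemma E_Hsum d F t n : E F -> E (Hsum d F t n).
Proof. intros HF. induction n; simpl. exact E_zero.
  exact (E_add _ _ IHn (E_scal (d n) _ (E_transl F (t n) HF))). Qed.

Lemma A0 y : A (fun _ => C0) y = C0.
Proof. assert (H: Cmul C0 C0 = C0) by (unfold Cmul, C0; simpl; f_equal; ring).
  pose proof (A_scal C0 (fun _ => C0) E_zero y) as H1. simpl in H1. rewrite H in H1.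
  rewrite H1. unfold Cmul, C0; simpl; f_equal; ring. Qed.

Lemma A_Hsum d F t n : E F -> forall y, A (Hsum d F t n) y = Hsum d (A F) t n y.
Proof. intros HF. induction n; intros y; simpl. apply A0.
  change (A (fun z => Cadd (Hsum d F t n z) (Cmul (d n) (F (z + t n)))) y = 
    Cadd (Hsum d (A F) t n y) (Cmul (d n) (A F (y + t n)))).
  rewrite A_add. rewrite IHn. f_equal.
  rewrite (A_scal (d n) (fun z => F (z + t n))). rewrite A_transl; auto. apply E_transl; auto.
  apply E_Hsum; auto. apply (E_scal (d n) _ (E_transl F (t n) HF)). Qed.

Lemma sup_exists F : E F -> exists s, is_sup_norm F s.
Proof. intros HF. destruct (E_bdd_uc F HF) as [[M HM] _].
  destruct (completeness (fun y => exists x, y = Cnorm (F x))) as [s Hs].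
  exists M; intros y [x ->]; auto. exists (Cnorm (F 0)); exists 0; auto.
  exists s; exact Hs. Qed.

Variables (p : R) (hp : 1 <= p).

Lemma op_key f n D t B : E f -> 0 < D -> 0 < B ->
  (forall y, rsum (fun k => D * powr (Cnorm (f (y + t k))) p) n <= B) ->
  rsum (fun k => D * powr (Cnorm (A f (t k))) p) n <= powr a p * B.
Proof.
  intros Hf HD HB HT.
  set (S := rsum (fun k => D * powr (Cnorm (A f (t k))) p) n).
  assert (HS0 : 0 <= S) by (apply rsum_ge0; intros; apply Rmult_le_pos; [lra|apply powr_ge0]).
  assert (HaB: 0 <= powr a p * B) by (apply Rmult_le_pos; [apply powr_ge0|lra]).
  destruct HS0 as [HS0|HS0]; [|lra].
  set (w := fun k => A f (t k)).
  set (r := fun k => Cnorm (w k)).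
  set (lam := fun k => powr (r k) p / (r k * r k)).
  set (d := fun k => (D * fst (w k) * lam k, - (D * snd (w k) * lam k))).
  assert (Hlam: forall k, lam k * (r k * r k) = powr (r k) p).
  { intros k. unfold lam. destruct (Req_dec (r k) 0) as [H0|H0].
    rewrite H0, powr_0. ring. field. auto. }
  assert (Hdw: forall k, Cmul (d k) (w k) = (D * powr (r k) p, 0)).
  { intros k. unfold d, Cmul; simpl. rewrite <- Hlam. unfold r; rewrite Cnorm_sq. f_equal; ring. }
  assert (Hdn: forall k, Cnorm (d k) = D * (powr (r k) p / r k)).
  { intros k. replace (d k) with (Cmul (D * lam k, 0) (fst (w k), - snd (w k)))
      by (unfold d, Cmul; simpl; f_equal; ring).
    rewrite Cnorm_mul, Cnorm_real.
    assert (Hl0: 0 <= lam k).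
    { unfold lam. apply Rmult_le_pos. apply powr_ge0.
      assert (0 <= r k * r k) by (unfold r; pose proof (Cnorm_ge0 (w k)); nra).
      destruct H as [H|H]. left; apply Rinv_0_lt_compat; auto. rewrite <- H, Rinv_0; lra. }
    rewrite Rabs_pos_eq by (apply Rmult_le_pos; lra).
    replace (Cnorm (fst (w k), - snd (w k))) with (r k) by (unfold r, Cnorm; simpl; f_equal; ring).
    unfold lam. destruct (Req_dec (r k) 0) as [H0|H0].
    rewrite H0, powr_0. unfold Rdiv; ring. field; auto. }
  set (M := powr (powr S (1/p)) (p-1) * powr B (1/p)).
  set (h := Hsum d f t n).
  assert (Hh: forall y, Cnorm (h y) <= M).
  { intros y. eapply Rle_trans. apply Hsum_norm.
    rewrite (rsum_ext _ (fun k => D * (powr (r k) p / r k * Cnorm (f (y + t k))))).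
    2:{ intros k _. rewrite Hdn. ring. }
    apply (sum_key p n D r (fun k => Cnorm (f (y + t k))) S B); auto.
    intros; apply Cnorm_ge0. intros; apply Cnorm_ge0. }
  assert (HAh: forall m, Hsum d (A f) t m 0 = (rsum (fun k => D * powr (r k) p) m, 0)).
  { induction m; simpl. reflexivity. rewrite IHm, Rplus_0_l. fold (w m). rewrite Hdw.
    unfold Cadd; simpl; f_equal; ring. }
  assert (HS: Cnorm (A h 0) = S).
  { unfold h. rewrite A_Hsum, HAh by auto. rewrite Cnorm_real. apply Rabs_pos_eq. lra. }
  assert (Eh: E h) by (apply E_Hsum; auto).
  destruct (sup_exists h Eh) as [s2 Hs2].
  destruct (sup_exists (A h) (A_into h Eh)) as [s1 Hs1].
  pose proof (A_bound h Eh s2 s1 Hs2 Hs1).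
  assert (s2 <= M) by (apply Hs2; intros z [y ->]; apply Hh).
  assert (S <= s1) by (apply Hs1; exists 0; auto).
  assert (S <= a * M) by (apply Rle_trans with s1; auto; apply Rle_trans with (a*s2); auto; apply Rmult_le_compat_l; auto).
  apply final_alg; auto.
Qed.
End Op.

Lemma powr_Rpower u e : 0 < u -> powr u e = Rpower u e.
Proof. intros; rewrite powr_pos; auto. Qed.

Lemma powr_lip_le p M u v : 1 <= p -> 0 < M -> 0 <= u <= v -> v <= M ->
  powr v p - powr u p <= p * powr M (p-1) * (v - u).
Proof.
  intros hp HM [Hu Huv] HvM.
  destruct (Rle_lt_or_eq_dec _ _ Huv) as [Hlt|Heq]; [|subst; lra].
  destruct Hu as [Hu|Hu].
  - rewrite !powr_Rpower by lra.
    destruct (MVT_cor2 (fun x => Rpower x p) (fun x => p * Rpower x (p-1)) u v Hlt) as [c [Hc Hcin]].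
    { intros c Hc. apply derivable_pt_lim_power. lra. }
    rewrite Hc. apply Rmult_le_compat_r. lra. apply Rmult_le_compat_l. lra.
    apply Rle_Rpower_l; lra.
  - subst. rewrite powr_0. rewrite powr_Rpower by lra.
    replace (Rpower v p) with (Rpower v (p-1) * v).
    2:{ replace p with ((p-1)+1) at 2 by ring. rewrite Rpower_plus, Rpower_1 by lra; ring. }
    assert (Rpower v (p-1) <= Rpower M (p-1)) by (apply Rle_Rpower_l; lra).
    assert (0 < Rpower v (p-1)) by (unfold Rpower; apply exp_pos).
    rewrite (powr_Rpower M) by lra.
    assert (Rpower v (p-1) * v <= Rpower M (p-1) * v) by (apply Rmult_le_compat_r; lra).
    assert (Rpower M (p-1) * v <= p * Rpower M (p-1) * v) by (apply Rmult_le_compat_r; nra). lra.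
Qed.

Lemma powr_lip p M u v : 1 <= p -> 0 < M -> 0 <= u <= M -> 0 <= v <= M ->
  Rabs (powr u p - powr v p) <= p * powr M (p-1) * Rabs (u - v).
Proof.
  intros hp HM Hu Hv. destruct (Rle_or_lt u v).
  - rewrite Rabs_minus_sym, (Rabs_minus_sym u).
    rewrite !Rabs_pos_eq. apply powr_lip_le; lra. lra.
    pose proof (powr_le u v p). lra.
  - rewrite !Rabs_pos_eq. apply powr_lip_le; lra. lra.
    pose proof (powr_le v u p). lra.
Qed.

Lemma Cnorm_sub_ge z w : Rabs (Cnorm z - Cnorm w) <= Cnorm (Csub z w).
Proof.
  assert (Hz : z = Cadd (Csub z w) w) by (unfold Cadd, Csub; destruct z, w; simpl; f_equal; ring).
  assert (Hw : w = Cadd (Csub w z) z) by (unfold Cadd, Csub; destruct z, w; simpl; f_equal; ring).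
  assert (Hs : Cnorm (Csub w z) = Cnorm (Csub z w)) by (unfold Cnorm, Csub; simpl; f_equal; ring).
  pose proof (Cnorm_add (Csub z w) w). pose proof (Cnorm_add (Csub w z) z).
  rewrite <- Hz in H. rewrite <- Hw in H0. apply Rabs_le; lra.
Qed.

Definition ucR (g : R -> R) := forall eps, 0 < eps -> exists delta, 0 < delta /\
    forall s t, Rabs (s - t) < delta -> Rabs (g s - g t) < eps.

Lemma uc_powr p F : 1 <= p -> bdd_fun F -> unif_cont F -> ucR (fun t => powr (Cnorm (F t)) p).
Proof.
  intros hp [M0 HM0] HF eps Heps.
  set (M := Rmax M0 1).
  assert (HM: 0 < M) by (unfold M; pose proof (Rmax_r M0 1); lra).
  set (L := p * powr M (p-1)).
  assert (HL: 0 < L) by (unfold L; apply Rmult_lt_0_compat; [lra|apply powr_gt0; auto]).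
  destruct (HF (eps / L)) as [de [Hde Hd]]. apply Rdiv_lt_0_compat; auto.
  exists de; split; auto. intros s t Hst.
  assert (Hb: forall x, 0 <= Cnorm (F x) <= M).
  { intros x; split. apply Cnorm_ge0. eapply Rle_trans. apply HM0. apply Rmax_l. }
  eapply Rle_lt_trans. apply (powr_lip p M); auto.
  fold L. eapply Rle_lt_trans. apply Rmult_le_compat_l. lra. apply Cnorm_sub_ge.
  pose proof (Hd s t Hst).
  replace eps with (L * (eps / L)) by (field; lra).
  apply Rmult_lt_compat_l; auto.
Qed.

Lemma ucR_cont g : ucR g -> forall x, continuous g x.
Proof.
  intros Hg x. apply continuity_pt_filterlim.
  intros eps Heps. destruct (Hg eps Heps) as [de [Hde Hd]].
  exists de; split; auto. intros y [_ Hy]. unfold R_dist in *. apply Hd; auto.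
Qed.

Lemma ucR_exRInt g a b : ucR g -> ex_RInt g a b.
Proof. intros Hg. apply (ex_RInt_continuous (V:=R_CompleteNormedModule)). intros; apply ucR_cont; auto. Qed.

Lemma RInt_total_eq g a b : ucR g -> RInt_total g a b = RInt g a b.
Proof.
  intros Hg. unfold RInt_total.
  destruct (excluded_middle_informative _) as [H|H].
  - symmetry. apply RInt_Reals.
  - exfalso. apply H. exists (ex_RInt_Reals_0 _ _ _ (ucR_exRInt g a b Hg)). auto.
Qed.

Lemma rsum_abs_diff f g n : Rabs (rsum f n - rsum g n) <= rsum (fun k => Rabs (f k - g k)) n.
Proof. induction n; simpl. rewrite Rminus_0_r, Rabs_R0; lra.
  replace (rsum f n + f n - (rsum g n + g n)) with ((rsum f n - rsum g n) + (f n - g n)) by ring.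
  eapply Rle_trans. apply Rabs_triang. lra. Qed.

Lemma rsum_S g n : rsum g (S n) = rsum g n + g n.
Proof. reflexivity. Qed.

Lemma rsum_const c n : rsum (fun _ => c) n = INR n * c.
Proof. induction n. simpl; ring. rewrite S_INR. simpl rsum. rewrite IHn; ring. Qed.

Lemma riemann g N : ucR g -> 0 < N -> forall eps, 0 < eps -> exists n0, (0 < n0)%nat /\
  forall n, (n0 <= n)%nat -> forall c,
  Rabs (rsum (fun k => (2*N/INR n) * g (c + INR k * (2*N/INR n))) n - RInt g c (c + 2*N)) <= eps.
Proof.
  intros Hg HN eps Heps.
  destruct (Hg (eps / (2*N))) as [de [Hde Hd]]. apply Rdiv_lt_0_compat; lra.
  destruct (archimed (2*N/de)) as [Hup _].
  set (n0 := S (Z.to_nat (up (2*N/de)))).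
  exists n0. split. unfold n0; lia.
  intros n Hn c.
  assert (Hn0: 2*N/de < INR n0).
  { unfold n0. rewrite S_INR. 
    assert (INR (Z.to_nat (up (2*N/de))) >= IZR (up (2*N/de)) - 0).
    { destruct (Z_lt_le_dec (up (2 * N / de)) 0).
      replace (Z.to_nat (up (2 * N / de))) with 0%nat by lia. simpl. assert (IZR (up (2 * N / de)) < 0) by (apply IZR_lt; lia). lra.
      rewrite INR_IZR_INZ, Z2Nat.id by lia. lra. }
    lra. }
  assert (HnR: INR n0 <= INR n) by (apply le_INR; auto).
  assert (Hnpos: 0 < INR n) by (assert (0 < INR n0) by (apply lt_0_INR; unfold n0; lia); lra).
  set (D := 2*N/INR n).
  assert (HD: 0 < D) by (unfold D; apply Rdiv_lt_0_compat; lra).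
  assert (HDde: D < de).
  { unfold D. apply (Rmult_lt_reg_r (INR n)); auto. unfold Rdiv. rewrite Rmult_assoc, Rinv_l by lra.
    assert (2*N < de * INR n0).
    { apply (Rmult_lt_reg_r (/de)). apply Rinv_0_lt_compat; auto.
      replace (de * INR n0 * /de) with (INR n0) by (field; lra). lra. }
    nra. }
  assert (Hchas: forall m, RInt g c (c + INR m * D) =
     rsum (fun k => RInt g (c + INR k * D) (c + INR (S k) * D)) m).
  { induction m. simpl. replace (c + 0 * D) with c by ring. rewrite RInt_point; reflexivity.
    rewrite rsum_S, <- IHm.
    rewrite <- (RInt_Chasles g c (c + INR m * D) (c + INR (S m) * D)); try apply ucR_exRInt; auto. }
  assert (Hnd: c + 2*N = c + INR n * D) by (unfold D; field; lra).
  rewrite Hnd, Hchas.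
  eapply Rle_trans. apply rsum_abs_diff.
  eapply Rle_trans. apply (rsum_le _ (fun _ => D * (eps/(2*N)))).
  { intros k _. fold D.
    set (a := c + INR k * D).
    replace (c + INR (S k) * D) with (a + D) by (unfold a; rewrite S_INR; ring).
    rewrite Rabs_minus_sym.
    replace (RInt g a (a + D) - D * g a) with (RInt (fun t => g t - g a) a (a+D)).
    2:{ rewrite (RInt_minus g (fun _ => g a)); [| apply ucR_exRInt; auto | apply ex_RInt_const].
        rewrite RInt_const. unfold minus, plus, opp, scal; simpl. unfold mult; simpl.
        change (Rplus (RInt g a (a + D)) (Ropp ((a + D - a) * g a)) = RInt g a (a + D) - D * g a). ring. }
    replace D with ((a + D) - a) at 2 by ring.
    apply abs_RInt_le_const. lra.
    apply (ex_RInt_minus g (fun _ => g a)). apply ucR_exRInt; auto. apply ex_RInt_const.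
    intros t Ht. left. apply Hd. rewrite Rabs_pos_eq; lra. }
  rewrite rsum_const. right. unfold D. field. lra.
Qed.

Lemma le_eps I K C : 0 <= C -> (forall eps, 0 < eps -> I <= K + eps * C) -> I <= K.
Proof. intros HC H. destruct (Rle_or_lt I K); auto.
  assert (0 < (I - K) / (2 * (C + 1))) by (apply Rdiv_lt_0_compat; lra).
  specialize (H _ H1).
  assert ((I - K) / (2 * (C + 1)) * C < I - K).
  { apply (Rmult_lt_reg_r (2*(C+1))). lra. field_simplify; try lra. nra. }
  lra. Qed.

Theorem theorem1p2p7
  (E : (R -> Cplx) -> Prop)
  (E_bdd_uc : forall f, E f -> bdd_fun f /\ unif_cont f)
  (E_zero : E (fun _ => C0))
  (E_add : forall f g, E f -> E g -> E (fun t => Cadd (f t) (g t)))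
  (E_scal : forall (c : Cplx) f, E f -> E (fun t => Cmul c (f t)))
  (E_closed : forall (fn : nat -> R -> Cplx) (g : R -> Cplx),
      (forall n, E (fn n)) -> unif_conv fn g -> E g)
  (E_transl : forall f (t : R), E f -> E (fun x => f (x + t)))
  (A : (R -> Cplx) -> (R -> Cplx))
  (A_into : forall f, E f -> E (A f))
  (A_add : forall f g, E f -> E g ->
      forall x, A (fun t => Cadd (f t) (g t)) x = Cadd (A f x) (A g x))
  (A_scal : forall (c : Cplx) f, E f ->
      forall x, A (fun t => Cmul c (f t)) x = Cmul c (A f x))
  (a : R) (a_nonneg : 0 <= a)
  (A_bound : forall f, E f -> forall s s',
      is_sup_norm f s -> is_sup_norm (A f) s' -> s' <= a * s)
  (A_transl : forall f (t : R), E f ->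
      forall x, A (fun y => f (y + t)) x = A f (x + t))
  (p N : R) (hp : 1 <= p) (hN : 0 < N)
  (f : R -> Cplx) (hf : E f)
  (s s' : R) (hs : is_pN_norm p N f s) (hs' : is_pN_norm p N (A f) s') :
  s' <= a * s.
Proof.
  set (gF := fun F : R -> Cplx => fun t => powr (Cnorm (F t)) p).
  assert (Ugf : ucR (gF f)).
  { destruct (E_bdd_uc f hf). apply uc_powr; auto. }
  assert (UgA : ucR (gF (A f))).
  { destruct (E_bdd_uc (A f) (A_into f hf)). apply uc_powr; auto. }
  assert (Hs0 : 0 <= s).
  { apply Rle_trans with (loc_pnorm p N f 0). apply powr_ge0. apply hs. exists 0; auto. }
  assert (Hloc : forall y, RInt (gF f) (y - N) (y + N) <= powr s p).
  { intros y. assert (Hl: loc_pnorm p N f y <= s) by (apply hs; exists y; auto).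
    unfold loc_pnorm in Hl. rewrite RInt_total_eq in Hl by exact Ugf.
    fold (gF f) in Hl.
    assert (HJ: 0 <= RInt (gF f) (y - N) (y + N)).
    { apply RInt_ge_0. lra. apply ucR_exRInt; auto. intros; apply powr_ge0. }
    rewrite <- (powr_inv_p _ p) by lra. apply powr_le. lra. split; auto. apply powr_ge0. }
  apply hs'. intros z [x ->].
  set (K := powr a p * powr s p).
  assert (HI : RInt (gF (A f)) (x - N) (x + N) <= K).
  { apply (le_eps _ _ (powr a p + 1)). pose proof (powr_ge0 a p); lra.
    intros eps Heps.
    destruct (riemann (gF (A f)) N UgA hN eps Heps) as [n1 [Hn1 R1]].
    destruct (riemann (gF f) N Ugf hN eps Heps) as [n2 [Hn2 R2]].
    set (n := Nat.max n1 n2).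
    set (D := 2*N/INR n).
    assert (HnR : 0 < INR n) by (apply lt_0_INR; unfold n; lia).
    assert (HD : 0 < D) by (unfold D; apply Rdiv_lt_0_compat; lra).
    set (t := fun k : nat => x - N + INR k * D).
    specialize (R1 n ltac:(unfold n; lia) (x - N)).
    replace (x - N + 2*N) with (x + N) in R1 by ring.
    assert (HT : forall y, rsum (fun k => D * powr (Cnorm (f (y + t k))) p) n <= powr s p + eps).
    { intros y. specialize (R2 n ltac:(unfold n; lia) (y + x - N)).
      replace (y + x - N + 2*N) with ((y + x) + N) in R2 by ring.
      replace (y + x - N) with ((y + x) - N) in R2 at 2 by ring.
      pose proof (Hloc (y + x)).
      rewrite (rsum_ext _ (fun k => 2 * N / INR n * gF f (y + x - N + INR k * (2 * N / INR n)))).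
      2:{ intros k _. unfold gF, t, D. replace (y + (x - N + INR k * (2*N/INR n))) with (y + x - N + INR k * (2*N/INR n)) by ring. reflexivity. }
      apply Rabs_le_between in R2. lra. }
    pose proof (op_key E E_bdd_uc E_zero E_add E_scal E_transl A A_into A_add A_scal a a_nonneg
       A_bound A_transl p hp f n D t (powr s p + eps) hf HD
       ltac:(pose proof (powr_ge0 s p); lra) HT) as HK.
    apply Rabs_le_between in R1.
    assert (Heq : rsum (fun k => D * powr (Cnorm (A f (t k))) p) n =
                  rsum (fun k => 2 * N / INR n * gF (A f) (x - N + INR k * (2 * N / INR n))) n)
      by reflexivity.
    rewrite Heq in HK. unfold K. lra. }
  unfold loc_pnorm. rewrite RInt_total_eq by exact UgA. fold (gF (A f)).
  replace (a * s) with (powr K (1/p)).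
  apply powr_le. unfold Rdiv; rewrite Rmult_1_l; left; apply Rinv_0_lt_compat; lra.
  split; auto. apply RInt_ge_0. lra. apply ucR_exRInt; auto. intros; apply powr_ge0.
  unfold K. rewrite <- powr_mult by lra. apply powr_inv_p'. lra. apply Rmult_le_pos; lra.
Qed.
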